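(* For an integer $k\ge1$ let $F_0(k)=0$, $F_1(k)=1$, $F_n(k)=kF_{n-1}(k)+F_{n-2}(k)$ for $n\ge2$, and for $n\ge2$ let $I_{k,n}(t)=\#(t\mathcal{T}\cap\mathbb{Z}^2)$ where $\mathcal{T}$ is the triangle with vertices $(0,0)$, $\left(\frac{F_{n-1}(k)}{F_n(k)},0\right)$ and $\left(0,\frac{F_n(k)}{F_{n-1}(k)}\right)$. Then for every $k\ge1$ and every even integer $n\ge2$, $F_n(k)$ is a common quasi-period of $I_{k,n}(t)$ and $I_{k,n+1}(t)$.
   Context: The Ehrhart function of a rational polygon is a quasipolynomial $\sum_i c_i(t)t^i$ with periodic coefficient functions $c_i$; an integer $N$ is a quasi-period if every $c_i$ is periodic with period $N$. *)

(* Defs.v *)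
From HB Require Import structures.
From mathcomp Require Import all_boot all_order all_algebra.
Set Implicit Arguments. Unset Strict Implicit. Unset Printing Implicit Defensive.
Import Order.TTheory GRing.Theory Num.Theory.
Local Open Scope ring_scope.

Fixpoint Fib (k : nat) (n : nat) : nat :=
  match n with
  | 0 => 0
  | 1 => 1
  | (m.+1 as p).+1 => k * Fib k p + Fib k m
  end%N.

Definition in_triangle (v0 v1 v2 p : rat * rat) : Prop :=
  exists l0 l1 l2 : rat,
    [/\ 0 <= l0, 0 <= l1, 0 <= l2 & l0 + l1 + l2 = 1] /\
    p.1 = l0 * v0.1 + l1 * v1.1 + l2 * v2.1 /\
    p.2 = l0 * v0.2 + l1 * v1.2 + l2 * v2.2.

Definition in_dilate (t : nat) (v0 v1 v2 p : rat * rat) : Prop :=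
  exists q, in_triangle v0 v1 v2 q /\ p = (t%:R * q.1, t%:R * q.2).

Definition TriV0 : rat * rat := (0, 0).
Definition TriV1 (k n : nat) : rat * rat := ((Fib k n.-1)%:R / (Fib k n)%:R, 0).
Definition TriV2 (k n : nat) : rat * rat := (0, (Fib k n)%:R / (Fib k n.-1)%:R).

Definition lattice_pt (z : int * int) : rat * rat := (z.1%:~R, z.2%:~R).

Definition I_is (k n t m : nat) : Prop :=
  exists s : seq (int * int),
    [/\ uniq s, size s = m &
        forall z, z \in s <-> in_dilate t TriV0 (TriV1 k n) (TriV2 k n) (lattice_pt z)].

Definition quasi_period (f : nat -> nat -> Prop) (N : nat) : Prop :=
  (0 < N)%N /\
  exists (d : nat) (c : nat -> nat -> rat),
    (forall i t, c i (t + N)%N = c i t) /\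
    (forall t : nat, (1 <= t)%N ->
       exists m : nat, f t m /\ m%:R = \sum_(i < d.+1) c i t * t%:R ^+ i).

(* Main.v *)
Require Import Defs.
From mathcomp Require Import all_boot all_order all_algebra.
From mathcomp Require Import zify ring lra.
Set Implicit Arguments. Unset Strict Implicit. Unset Printing Implicit Defensive.

Lemma FibSS k m : Fib k m.+2 = k * Fib k m.+1 + Fib k m.
Proof. by []. Qed.

Lemma Fib_cassini k m :
  if odd m then Fib k m * Fib k m.+2 = Fib k m.+1 * Fib k m.+1 + 1
  else Fib k m * Fib k m.+2 + 1 = Fib k m.+1 * Fib k m.+1.
Proof.
elim: m => [|m IH]; first by rewrite /= mul0n.
have e1 := FibSS k m; have e2 := FibSS k m.+1.
move: IH e1 e2; rewrite (oddS m).
move: (Fib k m) (Fib k m.+1) (Fib k m.+2) (Fib k m.+3) => a b c d.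
case: (odd m) => /= IH ec ed; subst c d; nia.
Qed.

Lemma Fib_pos k m : 0 < k -> 0 < Fib k m.+1.
Proof.
move=> hk; elim: m => [|m IH] //.
rewrite FibSS; nia.
Qed.



Lemma Fib_par k m : (k %| Fib k m.*2) /\ exists s, Fib k (m.*2).+1 = k * s + 1.
Proof.
elim: m => [|m [IH1 [s IH2]]]; first by split => //; exists 0; rewrite muln0.
have e1 : (m.+1).*2 = (m.*2).+2 by rewrite doubleS.
have h1 : k %| Fib k (m.+1).*2.
  by rewrite e1 FibSS dvdn_add // dvdn_mulr.
split => //; move: h1 => /dvdnP [q hq].
rewrite e1 FibSS -e1 hq IH2.
exists (q * k + s); ring.
Qed.

Lemma coprime_consec k m : coprime (Fib k m) (Fib k m.+1).
Proof.
elim: m => [|m IH] //.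
rewrite /coprime FibSS gcdnMDl gcdnC; exact IH.
Qed.

Lemma Fib_coprime k n : 0 < k -> ~~ odd n -> (2 <= n) ->
  coprime (Fib k n.+1) (Fib k n.-1).
Proof.
move=> hk ev hn.
case: n ev hn => [|n] // ev _.
rewrite /= in ev; rewrite negbK in ev.
rewrite FibSS coprime_sym /coprime gcdnDr -/(coprime _ _) coprimeMr.
rewrite coprime_consec andbT.
have [_ [s hs]] := Fib_par k n./2.
have -> : Fib k n.+1.-1 = Fib k (n./2.*2).+1 by rewrite /= -[in LHS](odd_double_half n) ev.
rewrite hs.
by rewrite coprime_sym /coprime mulnC gcdnMDl gcdn1.
Qed.
Definition cnt (al be ga : nat) : nat :=
  \sum_(0 <= x < (ga %/ al).+1) ((ga - al * x) %/ be).+1.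
Definition GG (A B t : nat) := cnt (B * B) (A * A) (A * B * t).
Definition DD (A B w t : nat) := \sum_(0 <= x < A) ((B * (t + B) - w * x) %/ A).+1.

Lemma wx_le A B w x : 0 < A -> A * w = B * B + 1 -> x < A -> w * x <= B * B.
Proof.
move=> hA hw hx.
have : A * (w * x) <= A * (B * B).
  rewrite mulnA hw.
  have w1 : 0 < w by rewrite lt0n; apply/eqP => w0; rewrite w0 muln0 addn1 in hw.
  have hAw : A <= B * B + 1 by rewrite -hw leq_pmulr.
  have h3 := leq_mul (leqnn (B * B)) (ltnW hx).
  have h4 : B * B * x.+1 <= B * B * A by rewrite leq_mul2l hx orbT.
  rewrite mulnS in h4; nia.
by rewrite leq_pmul2l.
Qed.

Lemma GG_step A B w t : 0 < A -> 0 < B -> A * w = B * B + 1 ->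
  GG A B (t + B) = GG A B t + DD A B w t.
Proof.
move=> hA hB hw.
rewrite /GG /cnt.
have eU : A * B * (t + B) %/ (B * B) = A * t %/ B + A.
  have -> : A * B * (t + B) = B * (A * B + A * t) by ring.
  rewrite divnMl // divnMDl //; lia.
have eU2 : A * B * t %/ (B * B) = A * t %/ B.
  have -> : A * B * t = B * (A * t) by ring.
  by rewrite divnMl.
rewrite eU eU2 (@big_cat_nat _ _ _ A) //=; last by rewrite -addSn leq_addl.
rewrite addnC; congr (_ + _).
  rewrite -{1}(add0n A) big_addn.
  have -> : (A * t %/ B + A).+1 - A = (A * t %/ B).+1 by rewrite -addSn addnK.
  apply: eq_big_nat => x hx; congr ((_ %/ _).+1).
  rewrite !mulnDr; lia.
rewrite /DD; apply: eq_big_nat => x /andP [_ hx].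
have hle := wx_le hA hw hx.
have -> : A * B * (t + B) - B * B * x = (B * (t + B) - w * x) * A + x.
  have h2 : w * x <= B * (t + B).
    by apply: (leq_trans hle); rewrite leq_mul2l leq_addl orbT.
  have e : (B * (t + B) - w * x) * A = A * (B * (t+B)) - A * (w * x).
    by rewrite mulnC mulnBr.
  have h5 : A * (w * x) <= A * (B * (t + B)) by rewrite leq_mul2l h2 orbT.
  rewrite e (mulnA A w x) hw mulnDl mul1n -(mulnA A B) in h5 *.
  move: h5; move: (A * (B * (t + B))) (B * B * x) => P Q; lia.
by rewrite divnMA divnMDl // (divn_small hx) addn0.
Qed.

Lemma mod_inj A w x y : coprime A w -> x < A -> y < A ->
  (w * x) %% A = (w * y) %% A -> x = y.
Proof.
move=> co.
wlog le : x y / x <= y.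
  move=> H hx hy e; case: (leqP x y) => h; first exact: H.
  by symmetry; apply: H => //; apply: ltnW.
move=> hx hy /eqP e.
rewrite eq_sym eqn_mod_dvd ?leq_mul2l ?le ?orbT // -mulnBr Gauss_dvdr // in e.
have : y - x < A by apply: leq_ltn_trans (leq_subr _ _) hy.
move=> hlt.
have h0 : y - x = 0.
  case: (posnP (y - x)) => // hp.
  by have := dvdn_leq hp e; rewrite leqNgt hlt.
lia.
Qed.

Lemma count_one A w c : 0 < A -> coprime A w -> (forall x, x < A -> w * x <= c) ->
  \sum_(0 <= x < A) ((c - w * x) %% A == 0 : nat) = 1.
Proof.
move=> hA co hle.
rewrite big_mkord.
have -> : \sum_(x < A) ((c - w * x) %% A == 0 : nat) =
          \sum_(x < A) (c %% A == (w * x) %% A : nat).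
  apply: eq_bigr => x _; congr nat_of_bool.
  by rewrite -/(dvdn _ _) -eqn_mod_dvd ?hle.
pose h (x : 'I_A) : 'I_A := Ordinal (ltn_pmod (w * x) hA).
have hinj : injective h.
  move=> x y /(congr1 val) /= e; apply: val_inj => /=.
  exact: mod_inj co (ltn_ord x) (ltn_ord y) e.
pose F := fun y : 'I_A => (c %% A == y : nat).
have -> : \sum_(x < A) (c %% A == (w * x) %% A : nat) = \sum_(x < A) F (h x) by [].
rewrite -(reindex_inj (P := fun _ => true) (F := F) hinj) /F.
rewrite (bigD1 (Ordinal (ltn_pmod c hA))) //= eqxx big1 // => i hi.
case: eqP => // e; case/negP: hi; apply/eqP; apply: val_inj => /=; by rewrite e.
Qed.

Lemma div_ceil K A : 0 < A -> (K + A.-1) %/ A = K %/ A + (K %% A != 0).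
Proof.
move=> hA.
rewrite {1}(divn_eq K A) -addnA divnMDl //; congr (_ + _).
case: eqP => [->|/eqP ne].
  by rewrite add0n divn_small // prednK.
have lt := ltn_pmod K hA.
have -> : K %% A + A.-1 = 1 * A + (K %% A).-1.
  by rewrite mul1n; move: ne; rewrite -lt0n; lia.
rewrite divnMDl // divn_small //; lia.
Qed.

Lemma DD_step A B w t : 0 < A -> A * w = B * B + 1 -> coprime A w ->
  DD A B w (t + B) = DD A B w t + B * B.
Proof.
move=> hA hw co.
have w1 : 0 < w by rewrite lt0n; apply/eqP => w0; rewrite w0 muln0 addn1 in hw.
have eBB : B * B = w.-1 * A + A.-1.
  have : A * w = A * w.-1 + A by rewrite -{1}(prednK w1) mulnS addnC.
  rewrite hw => e; rewrite mulnC; lia.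
rewrite /DD.
have hle : forall x, x < A -> w * x <= B * (t + B).
  move=> x hx; apply: leq_trans (wx_le hA hw hx) _.
  by rewrite leq_mul2l leq_addl orbT.
transitivity (\sum_(0 <= x < A) (((B * (t + B) - w * x) %/ A).+1 + w.-1 +
   ((B * (t + B) - w * x) %% A != 0))).
  apply: eq_big_nat => x /andP [_ hx].
  have -> : B * (t + B + B) - w * x = (B * (t + B) - w * x) + w.-1 * A + A.-1.
    have e2 : w.-1 * A + A.-1 = B * B by rewrite eBB.
    rewrite mulnDr; have := hle x hx.
    move: (w.-1 * A) (A.-1) (B * (t + B)) (w * x) (B * B) e2 => X Y P Q R; lia.
  set K := B * (t + B) - w * x.
  rewrite (addnC K) -addnA divnMDl // div_ceil //.
  move: (K %/ A) (nat_of_bool (K %% A != 0)) => u v; lia.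
rewrite !big_split /= sum_nat_const_nat subn0.
have hc := count_one hA co hle.
have : \sum_(0 <= x < A) ((B * (t + B) - w * x) %% A != 0 : nat) +
       \sum_(0 <= x < A) ((B * (t + B) - w * x) %% A == 0 : nat) = A.
  rewrite -big_split /= (eq_big_nat _ _ (F2 := fun _ => 1)).
    by rewrite sum_nat_const_nat subn0 muln1.
  by move=> x _; case: eqP.
rewrite hc eBB => e.
set S := \sum_(0 <= x < A) ((B * (t + B) - w * x) %% A != 0 : nat) in e *.
rewrite (mulnC A); move: (w.-1 * A) => X; lia.
Qed.

Lemma GG_diff A B w t : 0 < A -> 0 < B -> A * w = B * B + 1 -> coprime A w ->
  GG A B (t + B + B) + GG A B t = (GG A B (t + B)).*2 + B * B.
Proof.
move=> hA hB hw co.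
rewrite (GG_step _ hA hB hw) (GG_step t hA hB hw) (DD_step _ hA hw co).
rewrite -addnn; lia.
Qed.

Import GRing.Theory Num.Theory.
Local Open Scope ring_scope.

Lemma closed_form (g : nat -> nat) (N C r : nat) :
  (forall t, (g (t + N + N) + g t = (g (t + N)).*2 + C)%N) ->
  forall j : nat, (g (r + j * N)%N)%:R =
    (g r)%:R + j%:R * ((g (r + N)%N)%:R - (g r)%:R) + C%:R * (j%:R * (j%:R - 1) / 2) :> rat.
Proof.
move=> H j.
suff : (g (r + j * N)%N)%:R =
    (g r)%:R + j%:R * ((g (r + N)%N)%:R - (g r)%:R) + C%:R * (j%:R * (j%:R - 1) / 2) :> rat /\
  (g (r + j.+1 * N)%N)%:R =
    (g r)%:R + j.+1%:R * ((g (r + N)%N)%:R - (g r)%:R) + C%:R * (j.+1%:R * (j.+1%:R - 1) / 2) :> rat.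
  by case.
elim: j => [|j [IH1 IH2]].
  by split; [rewrite mul0n addn0 | rewrite mul1n]; ring.
split => //.
have := H (r + j * N)%N.
have e1 : (r + j * N + N = r + j.+1 * N)%N by rewrite mulSn; lia.
have e2 : (r + j.+1 * N + N = r + j.+2 * N)%N by rewrite (mulSn j.+1); lia.
rewrite e1 e2 => /(congr1 (fun n : nat => n%:R : rat)).
rewrite !natrD -muln2 natrM IH1 IH2 => e.
move/(canRL (addrK _)): e => ->.
by rewrite !mulrS; field.
Qed.

Lemma qp_from (f : nat -> nat -> Prop) (g : nat -> nat) (N C : nat) :
  (0 < N)%N -> (forall t, (g (t + N + N) + g t = (g (t + N)).*2 + C)%N) ->
  (forall t, (1 <= t)%N -> f t (g t)) -> quasi_period f N.
Proof.
move=> hN H hf; split => //.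
pose P0 t : rat := (g (t %% N)%N)%:R.
pose P1 t : rat := (g (t %% N + N)%N)%:R - (g (t %% N)%N)%:R.
pose u : rat := N%:R^-1.
pose v t : rat := - (t %% N)%N%:R / N%:R.
pose c (i t : nat) : rat :=
  match i with
  | 0 => P0 t + P1 t * v t + C%:R / 2 * (v t * (v t - 1))
  | 1 => P1 t * u + C%:R / 2 * (u * (2 * v t - 1))
  | _ => C%:R / 2 * (u * u)
  end.
exists 2%N, c; split.
  by move=> i t; rewrite /c /P0 /P1 /v modnDr.
move=> t ht; exists (g t); split; first exact: hf.
rewrite !big_ord_recr big_ord0 /= add0r expr0 expr1 expr2 mulr1.
have hN0 : N%:R != 0 :> rat by rewrite pnatr_eq0 -lt0n.
have et : t = (t %% N + t %/ N * N)%N by rewrite addnC -divn_eq.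
have hj : (t %/ N)%N%:R = u * t%:R + v t.
  have et' : t%:R = ((t %% N)%N)%:R + ((t %/ N)%N)%:R * N%:R :> rat.
    by rewrite [in LHS]et natrD natrM.
  by rewrite et' /u /v; field.
have eg : g t = g (t %% N + t %/ N * N)%N by rewrite -et.
by rewrite eg (closed_form _ H) hj /c /P0 /P1 /u; field.
Qed.

Import Order.TTheory GRing.Theory Num.Theory.
Local Close Scope ring_scope.

Lemma int_nonneg (z : int) : (0 <= z)%R -> exists n : nat, z = Posz n.
Proof. by case: z => // n _; exists n. Qed.

Lemma region_list (al be ga : nat) : 0 < al -> 0 < be ->
  exists s : seq (int * int),
    [/\ uniq s, size s = cnt al be ga &
        forall z, z \in s <-> ((0 <= z.1)%R /\ (0 <= z.2)%R /\
                               (al%:Z * z.1 + be%:Z * z.2 <= ga%:Z)%R)].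
Proof.
move=> hal hbe.
exists [seq (Posz x, Posz y) | x <- iota 0 (ga %/ al).+1, y <- iota 0 ((ga - al * x) %/ be).+1].
split.
- apply: allpairs_uniq_dep; first exact: iota_uniq.
    by move=> x _; exact: iota_uniq.
  by move=> [x1 y1] [x2 y2] _ _ [/= -> ->].
- rewrite size_allpairs_dep /cnt sumnE big_map /index_iota subn0.
  by apply: eq_bigr => x _; rewrite size_iota.
- move=> [z1 z2]; split.
    move=> /allpairsPdep [x [y [hx hy [-> ->]]]].
    rewrite mem_iota add0n in hx; rewrite mem_iota add0n in hy.
    split => //; split => //.
    rewrite -!PoszM -PoszD lez_nat.
    rewrite ltnS leq_divRL // in hx; rewrite ltnS leq_divRL // in hy.
    move: hx hy; rewrite (mulnC x) (mulnC y); lia.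
  move=> [h1 [h2 h3]]; rewrite /= in h1 h2 h3.
  have [x ex] := int_nonneg h1; have [y ey] := int_nonneg h2; subst z1 z2.
  rewrite -!PoszM -PoszD lez_nat in h3.
  apply/allpairsPdep; exists x, y; split => //.
    by rewrite mem_iota add0n ltnS leq_divRL // mulnC; lia.
  by rewrite mem_iota add0n ltnS leq_divRL // mulnC; lia.
Qed.

Lemma region_list_swap (al be ga : nat) : 0 < al -> 0 < be ->
  exists s : seq (int * int),
    [/\ uniq s, size s = cnt al be ga &
        forall z, z \in s <-> ((0 <= z.1)%R /\ (0 <= z.2)%R /\
                               (be%:Z * z.1 + al%:Z * z.2 <= ga%:Z)%R)].
Proof.
move=> hal hbe; have [s [us ss ms]] := region_list ga hal hbe.
pose sw (z : int * int) := (z.2, z.1).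
have swK : involutive sw by case.
exists (map sw s); split.
- by rewrite map_inj_uniq //; exact: inv_inj.
- by rewrite size_map.
- move=> z; rewrite -{1}(swK z) (mem_map (inv_inj swK)) ms /=.
  by rewrite addrC; split => [[? [? ?]]|[? [? ?]]].
Qed.

Local Open Scope ring_scope.

Lemma dilate_iff (A B t : nat) (z : int * int) : (0 < A)%N -> (0 < B)%N -> (0 < t)%N ->
  in_dilate t TriV0 (A%:R / B%:R, 0) (0, B%:R / A%:R) (lattice_pt z) <->
  (0 <= z.1 /\ 0 <= z.2 /\ (B * B)%N%:Z * z.1 + (A * A)%N%:Z * z.2 <= (A * B * t)%N%:Z).
Proof.
move=> hA hB ht.
have a0 : 0 < A%:R :> rat by rewrite ltr0n.
have b0 : 0 < B%:R :> rat by rewrite ltr0n.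
have t0 : 0 < t%:R :> rat by rewrite ltr0n.
have eint : ((B * B)%N%:Z * z.1 + (A * A)%N%:Z * z.2 <= (A * B * t)%N%:Z) =
   ((B%:R * B%:R) * (z.1%:~R : rat) + (A%:R * A%:R) * z.2%:~R <= A%:R * B%:R * t%:R).
  by rewrite -(ler_int rat) intrD !intrM -!pmulrn !natrM.
rewrite eint -(ler0z rat z.1) -(ler0z rat z.2).
clear eint; case: z => z1 z2 /=.
rewrite /in_dilate /in_triangle /lattice_pt /TriV0 /=.
move: (z1%:~R : rat) (z2%:~R : rat) => x y.
rewrite /in_dilate /in_triangle /lattice_pt /TriV0 /=.
split.
  move=> [[q1 q2] [[l0 [l1 [l2 [[h0 h1 h2 hs] [/= e1 e2]]]]] [ex ey]]].
  rewrite ex ey e1 e2 !mulr0 !add0r !addr0.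
  have hl : l1 + l2 <= 1 by lra.
  have hge : forall l u v : rat, 0 <= l -> 0 < u -> 0 < v -> 0 <= t%:R * (l * (u / v)).
    by move=> l u v hl0 hu hv; apply: mulr_ge0; [exact: ltW | apply: mulr_ge0 => //; apply: divr_ge0; exact: ltW].
  split; first exact: hge.
  split; first exact: hge.
  have -> : B%:R * B%:R * (t%:R * (l1 * (A%:R / B%:R))) +
            A%:R * A%:R * (t%:R * (l2 * (B%:R / A%:R))) =
            A%:R * B%:R * t%:R * (l1 + l2) :> rat.
    by field; rewrite ?lt0r_neq0.
  have hp : 0 <= A%:R * B%:R * t%:R :> rat by rewrite !mulr_ge0 // ltW.
  by rewrite -[X in _ <= X]mulr1 ler_wpM2l.
move=> [hx [hy hin]].
pose l1 := x * B%:R / (A%:R * t%:R).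
pose l2 := y * A%:R / (B%:R * t%:R).
have hsum : l1 + l2 = (B%:R * B%:R * x + A%:R * A%:R * y) / (A%:R * B%:R * t%:R).
  by rewrite /l1 /l2; field; rewrite ?lt0r_neq0.
have habt : 0 < A%:R * B%:R * t%:R :> rat by rewrite !mulr_gt0.
have hle1 : l1 + l2 <= 1 by rewrite hsum ler_pdivrMr // mul1r.
exists (x / t%:R, y / t%:R); split.
  exists (1 - l1 - l2), l1, l2; split.
    split.
    - lra.
    - by rewrite /l1 !mulr_ge0 ?invr_ge0 ?mulr_ge0 // ltW.
    - by rewrite /l2 !mulr_ge0 ?invr_ge0 ?mulr_ge0 // ltW.
    - ring.
  rewrite /= /l1 /l2 !mulr0 !add0r !addr0; split; field; rewrite ?lt0r_neq0 //.
by congr pair; rewrite /= mulrC divfK // lt0r_neq0.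
Qed.


Lemma I_case1 k n t : (0 < k)%N -> (2 <= n)%N -> (1 <= t)%N ->
  I_is k n t (GG (Fib k n.-1) (Fib k n) t).
Proof.
move=> hk hn ht.
case: n hn => [|[|m]] // _.
have hA := Fib_pos m hk; have hB := Fib_pos m.+1 hk.
have hBB : (0 < Fib k m.+2 * Fib k m.+2)%N by rewrite muln_gt0 hB.
have hAA : (0 < Fib k m.+1 * Fib k m.+1)%N by rewrite muln_gt0 hA.
have [s [us ss ms]] := region_list (Fib k m.+1 * Fib k m.+2 * t) hBB hAA.
exists s; split => // z; rewrite ms.
by rewrite (dilate_iff z hA hB ht).
Qed.

Lemma I_case2 k n t : (0 < k)%N -> (2 <= n)%N -> (1 <= t)%N ->
  I_is k n.+1 t (GG (Fib k n.+1) (Fib k n) t).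
Proof.
move=> hk hn ht.
case: n hn => [|[|m]] // _.
have hA := Fib_pos m.+1 hk; have hB := Fib_pos m.+2 hk.
have hBB : (0 < Fib k m.+3 * Fib k m.+3)%N by rewrite muln_gt0 hB.
have hAA : (0 < Fib k m.+2 * Fib k m.+2)%N by rewrite muln_gt0 hA.
have [s [us ss ms]] := region_list_swap (Fib k m.+3 * Fib k m.+2 * t) hAA hBB.
exists s; split => // z; rewrite ms.
by rewrite (dilate_iff z hA hB ht) (mulnC (Fib k m.+2) (Fib k m.+3)).
Qed.

Theorem theorem3p2 (k n : nat) :
  (1 <= k)%N -> (2 <= n)%N -> ~~ odd n ->
  quasi_period (I_is k n) (Fib k n) /\ quasi_period (I_is k n.+1) (Fib k n).
Proof.
move=> hk hn ev.
have hco := Fib_coprime hk ev hn.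
case: n hn ev hco => [|[|m]] // hn ev hco.
have hA := Fib_pos m hk; have hB := Fib_pos m.+1 hk; have hC := Fib_pos m.+2 hk.
have cas := Fib_cassini k m.+1.
have om : odd m.+1 by move: ev; rewrite /= negbK.
rewrite om in cas.
split.
- apply: (@qp_from _ (GG (Fib k m.+1) (Fib k m.+2)) _ (Fib k m.+2 * Fib k m.+2)) => //.
    move=> t; apply: (GG_diff t hA hB cas); by rewrite coprime_sym.
  by move=> t ht; apply: (I_case1 hk hn ht).
- apply: (@qp_from _ (GG (Fib k m.+3) (Fib k m.+2)) _ (Fib k m.+2 * Fib k m.+2)) => //.
    move=> t; apply: (GG_diff t hC hB _ hco); by rewrite mulnC.
  by move=> t ht; apply: (I_case2 hk hn ht).
Qed.
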